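(* Let $0<m\le L$, $\kappa=L/m$, let $\rho\in(0,1)$ satisfy $1/(1-\rho)\in[\sqrt{3\kappa+1}/2,(\kappa+1)/2]$, let $c\in[0,1/2]$ be the solution of $\kappa(1-\rho)\big(1-c\rho-c^2(1+\rho)\big)=(1+\rho)\big(1-c\rho-c^2(1-\rho)\big)$, and consider the two-step momentum algorithm with parameters $\alpha=(1+\rho)(1+c-c\rho)/(L(1+c))$, $\gamma=\beta=c\rho^2/\big((\alpha L-1)(1+c)\big)$. Then the extreme values of $\hat J$ over $[m,L]$ satisfy $$\hat J_{\max}=\hat J(m)=\frac{\sigma_w^2(1-c)^2(r\kappa+1)}{2(1-c-c\rho^2)(1+\rho)(1-c+c\rho)}\;\ge\;\hat J(L)=\frac{\sigma_w^2(1+c)^2(1+c-c\rho^2)}{(1-\rho^2)(1+c-c\rho)(1+c+c\rho)(1+c+c\rho^2)},$$ and $\hat J_{\min}=\hat J(1/\alpha)=\sigma_w^2$, where $r=\dfrac{(1+c)(1-c+c\rho)}{(1-c)(1+c-c\rho)}\in[1,3]$.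
   Context: For the two-step momentum algorithm $x^{t+2}=x^{t+1}+\beta(x^{t+1}-x^t)-\alpha\nabla f\big(x^{t+1}+\gamma(x^{t+1}-x^t)\big)+\sigma_w w^t$ applied to quadratics with Hessian eigenvalues in $[m,L]$ (white noise $w^t$ with zero mean and identity covariance, $\sigma_w\ge0$), define for $\lambda>0$: $a(\lambda)=\beta-\gamma\alpha\lambda$, $b(\lambda)=(1+\gamma)\alpha\lambda-(1+\beta)$, $d(\lambda)=a+b+1$, $l(\lambda)=a-b+1$, $h(\lambda)=1-a$, and $\hat J(\lambda)=\sigma_w^2(d(\lambda)+l(\lambda))/(2d(\lambda)h(\lambda)l(\lambda))$ (the contribution of Hessian eigenvalue $\lambda$ to the steady-state variance of $x^t-x^\star$). $\hat J_{\max}=\max_{\lambda\in[m,L]}\hat J(\lambda)$, $\hat J_{\min}=\min_{\lambda\in[m,L]}\hat J(\lambda)$. *)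

(* Defs.v *)
From Stdlib Require Import Reals.
Open Scope R_scope.

(* Coefficients of the characteristic polynomial of the two-step momentum
   algorithm restricted to the Hessian eigenvalue lam. *)
Definition a_coef (alpha beta gamma lam : R) : R := beta - gamma * alpha * lam.
Definition b_coef (alpha beta gamma lam : R) : R :=
  (1 + gamma) * alpha * lam - (1 + beta).
Definition d_coef (alpha beta gamma lam : R) : R :=
  a_coef alpha beta gamma lam + b_coef alpha beta gamma lam + 1.
Definition l_coef (alpha beta gamma lam : R) : R :=
  a_coef alpha beta gamma lam - b_coef alpha beta gamma lam + 1.
Definition h_coef (alpha beta gamma lam : R) : R :=
  1 - a_coef alpha beta gamma lam.

Definition Jhat (alpha beta gamma sigma_w lam : R) : R :=
  sigma_w ^ 2 * (d_coef alpha beta gamma lam + l_coef alpha beta gamma lam)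
  / (2 * d_coef alpha beta gamma lam * h_coef alpha beta gamma lam
       * l_coef alpha beta gamma lam).

(* Main.v *)
Require Import Defs.
From Stdlib Require Import Reals Lra Psatz.
Open Scope R_scope.

Definition G (b u : R) : R := (1 - b*u) / ((1+u)*(1+b*u)*(1-(1+2*b)*u)).

Lemma frac_le a p b q : 0 < p -> 0 < q -> a*q <= b*p -> a/p <= b/q.
Proof.
  intros Hp Hq H.
  replace (a/p) with (a*q * / (p*q)) by (field; lra).
  replace (b/q) with (b*p * / (p*q)) by (field; lra).
  apply Rmult_le_compat_r; [|exact H].
  left; apply Rinv_0_lt_compat; nra.
Qed.

Lemma D_pos b u : 0 <= b < 1 -> -1 < u -> (1+2*b)*u < 1 ->
  0 < (1+u)*(1+b*u)*(1-(1+2*b)*u).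
Proof.
  intros Hb Hu Hk.
  assert (0 <= b*(u+1)) by (apply Rmult_le_pos; lra).
  apply Rmult_lt_0_compat; [apply Rmult_lt_0_compat|]; lra.
Qed.

Lemma G_ge1 b u : 0 <= b < 1 -> -1 < u -> (1+2*b)*u < 1 -> 1 <= G b u.
Proof.
  intros Hb Hu Hk. unfold G.
  replace 1 with (1/1) at 1 by field.
  apply frac_le; [lra| apply D_pos; auto|].
  assert (0 <= b*(1+2*b)*(1+u)).
  { apply Rmult_le_pos; [apply Rmult_le_pos|]; lra. }
  assert (0 <= u^2 * ((1+b) + b*(1+2*b)*(1+u))).
  { apply Rmult_le_pos; [nra| lra]. }
  nra.
Qed.

Lemma G_dec b x y : 0 <= b < 1 -> -1 < x -> x <= y -> y <= 0 ->
  G b y <= G b x.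
Proof.
  intros Hb Hx Hxy Hy. unfold G.
  assert (Hk : forall u, u <= 0 -> (1+2*b)*u < 1).
  { intros u Hu. assert (0 <= b*(-u)) by (apply Rmult_le_pos; lra). nra. }
  apply frac_le; [apply D_pos; [lra|lra|apply Hk; lra] | apply D_pos; [lra|lra|apply Hk; lra]|].
  set (a := -x). set (a' := -y).
  set (s := a + a'). set (p := a*a').
  set (c1 := 1 + b - (b^2 + 2*b^3)*p).
  assert (Ha : 0 <= a' /\ a' <= a /\ a < 1) by (unfold a, a'; lra).
  assert (Hp0 : 0 <= p) by (unfold p; nra).
  assert (Hp1 : p <= 1) by (unfold p; nra).
  assert (Hs : s <= 2) by (unfold s; lra).
  assert (HT : 0 <= s*c1 + 2*b^3*p).
  { destruct (Rle_or_lt 0 c1) as [Hc|Hc].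
    - assert (0 <= s*c1) by (apply Rmult_le_pos; unfold s; lra).
      assert (0 <= 2*b^3*p) by (apply Rmult_le_pos; [|lra]; assert (0<=b^3) by (apply pow_le; lra); lra).
      lra.
    - assert (0 <= (2-s)*(-c1)) by (apply Rmult_le_pos; lra).
      assert (0 <= b^2*p <= 1) by (split; [apply Rmult_le_pos; nra | nra]).
      assert (0 <= (1+b)*(1-b^2*p)) by (apply Rmult_le_pos; lra).
      unfold c1 in *. nra. }
  assert (H1 : 0 <= b*(1+2*b)*(a*(1-a) + a'*(1-a'))).
  { apply Rmult_le_pos; [apply Rmult_le_pos; lra|]. nra. }
  assert (HS : 0 <= (1+b)*s + b*(1+2*b)*(a*(1-a) + a'*(1-a')) + 2*b^3*p
                   - b^2*(1+2*b)*p*s).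
  { unfold c1 in HT. nra. }
  assert (0 <= (y-x) * ((1+b)*s + b*(1+2*b)*(a*(1-a) + a'*(1-a')) + 2*b^3*p
                   - b^2*(1+2*b)*p*s)) by (apply Rmult_le_pos; lra).
  unfold s, p, a, a' in *. nra.
Qed.

Lemma G_inc b x y : 0 <= b < 1 -> 0 <= x -> x <= y -> (1+2*b)*y < 1 ->
  G b x <= G b y.
Proof.
  intros Hb Hx Hxy Hy. unfold G.
  assert (Hy1 : y < 1) by nra.
  apply frac_le; [apply D_pos; [lra|lra|nra] | apply D_pos; [lra|lra|nra]|].
  assert (Hby : 0 <= 1 - b*y) by nra.
  assert (Hbx : 0 <= 1 - b*x) by nra.
  set (Q := 1 + 2*b + 2*b^2).
  assert (0 <= Q) by (unfold Q; nra).
  assert (0 <= Q*x*(1-b*y)) by (apply Rmult_le_pos; [apply Rmult_le_pos|]; lra).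
  assert (Hbk : 0 <= b*(1+2*b)) by nra.
  assert (0 <= b*(1+2*b)*x^2*(1-b*y)) by (apply Rmult_le_pos; [apply Rmult_le_pos|]; nra).
  assert (0 <= b*(1+2*b)*y^2*(1-b*x)) by (apply Rmult_le_pos; [apply Rmult_le_pos|]; nra).
  assert (0 <= b*(1+2*b)*x*y) by (apply Rmult_le_pos; [apply Rmult_le_pos|]; nra).
  assert (0 <= (y-x)*(Q*y + Q*x*(1-b*y) + b*(1+2*b)*x^2*(1-b*y) + b*(1+2*b)*y^2*(1-b*x) + b*(1+2*b)*x*y)).
  { assert (0 <= Q*y) by (apply Rmult_le_pos; lra). apply Rmult_le_pos; lra. }
  unfold Q in *. nra.
Qed.

Lemma Jhat_G al be sw lam : 0 <= be < 1 -> -1 < al*lam - 1 -> (1+2*be)*(al*lam-1) < 1 ->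
  Jhat al be be sw lam = sw^2 * G be (al*lam - 1).
Proof.
  intros Hb Hu Hk.
  pose proof (D_pos be (al*lam-1) Hb Hu Hk) as HD.
  unfold Jhat, G.
  replace (d_coef al be be lam) with (1 + (al*lam-1)) by (unfold d_coef, a_coef, b_coef; ring).
  replace (l_coef al be be lam) with (1 - (1+2*be)*(al*lam-1)) by (unfold l_coef, a_coef, b_coef; ring).
  replace (h_coef al be be lam) with (1 + be*(al*lam-1)) by (unfold h_coef, a_coef; ring).
  set (u := al*lam-1) in *.
  field.
  assert (0 < 1 + be*u) by (assert (0 <= be*(u+1)) by (apply Rmult_le_pos; lra); lra).
  repeat split; lra.
Qed.

Lemma Rdiv_le_0_compat' a b : 0 <= a -> 0 < b -> 0 <= a / b.
Proof. intros. unfold Rdiv. apply Rmult_le_pos; [auto|left; apply Rinv_0_lt_compat; auto]. Qed.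

Ltac nz := repeat match goal with
 | |- _ /\ _ => split
 | |- ?a * ?b <> 0 => apply Rmult_integral_contrapositive_currified
 | |- _ <> 0 => apply Rgt_not_eq
 end.

Theorem lemma6 (m L rho c sigma_w alpha beta gamma : R) :
  0 < m -> m <= L ->
  0 < rho < 1 ->
  sqrt (3 * (L / m) + 1) / 2 <= 1 / (1 - rho) <= (L / m + 1) / 2 ->
  0 <= c <= 1 / 2 ->
  (L / m) * (1 - rho) * (1 - c * rho - c ^ 2 * (1 + rho))
    = (1 + rho) * (1 - c * rho - c ^ 2 * (1 - rho)) ->
  0 <= sigma_w ->
  alpha = (1 + rho) * (1 + c - c * rho) / (L * (1 + c)) ->
  beta = c * rho ^ 2 / ((alpha * L - 1) * (1 + c)) ->
  gamma = beta ->
  let kappa := L / m in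
  let r := (1 + c) * (1 - c + c * rho) / ((1 - c) * (1 + c - c * rho)) in
  let J := Jhat alpha beta gamma sigma_w in
  (* hat J_max = hat J(m) *)
  (forall lam, m <= lam <= L -> J lam <= J m) /\
  J m = sigma_w ^ 2 * (1 - c) ^ 2 * (r * kappa + 1)
        / (2 * (1 - c - c * rho ^ 2) * (1 + rho) * (1 - c + c * rho)) /\
  J L <= J m /\
  J L = sigma_w ^ 2 * (1 + c) ^ 2 * (1 + c - c * rho ^ 2)
        / ((1 - rho ^ 2) * (1 + c - c * rho) * (1 + c + c * rho)
           * (1 + c + c * rho ^ 2)) /\
  (* hat J_min = hat J(1/alpha) = sigma_w^2, with 1/alpha in [m, L] *)
  m <= 1 / alpha <= L /\
  (forall lam, m <= lam <= L -> J (1 / alpha) <= J lam) /\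
  J (1 / alpha) = sigma_w ^ 2 /\
  1 <= r <= 3.
Proof.
  intros Hm HmL Hr Hsq Hc Heq Hs Hal Hbe Hga kappa r J.
  subst gamma.
  assert (HL : 0 < L) by lra.
  assert (Hcr : 0 <= c*rho) by (apply Rmult_le_pos; lra).
  assert (Hcr1 : c*rho <= rho/2) by nra.
  assert (Hcr2 : c*rho <= c) by nra.
  assert (Hcr3 : c*rho^2 <= c*rho) by nra.
  assert (Hcr4 : 0 <= c*rho^2) by nra.
  assert (Hcr5 : c*(1+rho) <= (1+rho)/2) by nra.
  assert (P1 : 0 < 1 - c*rho) by lra.
  assert (P2 : 0 < 1 - c - c*rho) by lra.
  assert (P3 : 0 < 1 - c - c*rho^2) by lra.
  assert (P4 : 0 < 1 + c - c*rho) by lra.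
  assert (P5 : 0 < 1 - c + c*rho) by lra.
  assert (P6 : 0 < 1 - c) by lra.
  assert (P7 : 0 < 1 + c) by lra.
  assert (P8 : 0 < 1 - rho) by lra.
  assert (P9 : 0 < 1 + rho) by lra.
  assert (P10 : 0 < 1 + c + c*rho^2) by lra.
  assert (P11 : 0 < 1 + c + c*rho) by lra.
  assert (P12 : 0 < 1 - c + c*rho^2) by lra.
  assert (P13 : 0 < 1 - rho^2) by nra.
  assert (Hk : kappa = (1+rho)*(1-c)*(1+c-c*rho)/((1-rho)*(1+c)*(1-c-c*rho))).
  { fold kappa in Heq.
    apply (Rmult_eq_reg_r ((1-rho)*(1+c)*(1-c-c*rho))); [|nz; lra].
    field_simplify; [|nz; lra].
    replace (1 - c * rho - c ^ 2 * (1 + rho)) with ((1+c)*(1-c-c*rho)) in Heq by ring.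
    replace (1 - c * rho - c ^ 2 * (1 - rho)) with ((1-c)*(1+c-c*rho)) in Heq by ring.
    lra. }
  assert (HLk : L = kappa * m) by (unfold kappa; field; lra).
  assert (HaL : alpha * L = (1+rho)*(1+c-c*rho)/(1+c)) by (rewrite Hal; field; nz; lra).
  assert (Hapos : 0 < alpha) by (rewrite Hal; apply Rdiv_lt_0_compat; nra).
  assert (Ham : alpha * m = (1-rho)*(1-c-c*rho)/(1-c)).
  { assert (Hkp : 0 < kappa) by (unfold kappa; apply Rdiv_lt_0_compat; lra).
    replace (alpha*m) with (alpha*L/kappa) by (rewrite HLk; field; lra).
    rewrite HaL, Hk. field. nz; lra. }
  set (uL := rho*(1-c*rho)/(1+c)).
  set (um := -(rho*(1-c*rho)/(1-c))).
  assert (HuL : alpha*L - 1 = uL) by (rewrite HaL; unfold uL; field; lra).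
  assert (Hum : alpha*m - 1 = um) by (rewrite Ham; unfold um; field; lra).
  set (b := c*rho/(1-c*rho)).
  assert (Hb : beta = b).
  { rewrite Hbe, HuL. unfold uL, b. field. nz; lra. }
  clear Hbe.
  assert (Hb01 : 0 <= b < 1).
  { unfold b; split; [apply Rdiv_le_0_compat'; lra|].
    apply (Rmult_lt_reg_r (1-c*rho)); [lra|]. field_simplify; lra. }
  assert (HkL : (1+2*b)*uL = rho*(1+c*rho)/(1+c)) by (unfold b, uL; field; lra).
  assert (HkL1 : (1+2*b)*uL < 1).
  { rewrite HkL. apply (Rmult_lt_reg_r (1+c)); [lra|]. field_simplify; nra. }
  assert (HuL0 : 0 <= uL) by (unfold uL; apply Rdiv_le_0_compat'; nra).
  assert (Hum0 : um <= 0) by (unfold um; assert (0 <= rho*(1-c*rho)/(1-c)) by (apply Rdiv_le_0_compat'; nra); lra).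
  assert (Hum1 : -1 < um) by (rewrite <- Hum; nra).
  assert (HJ : forall lam, m <= lam <= L -> J lam = sigma_w^2 * G b (alpha*lam - 1)
                 /\ um <= alpha*lam - 1 <= uL).
  { intros lam Hl.
    assert (um <= alpha*lam - 1 <= uL) by (rewrite <- Hum, <- HuL; split; nra).
    split; [|auto]. unfold J. rewrite Hb. apply Jhat_G; [auto|lra|].
    destruct (Rle_or_lt (alpha*lam-1) 0).
    - assert (0 <= b*(-(alpha*lam-1))) by (apply Rmult_le_pos; lra). nra.
    - assert (0 <= (1+2*b)*(uL - (alpha*lam-1))) by (apply Rmult_le_pos; lra). lra. }
  assert (EL : G b uL = (1 + c) ^ 2 * (1 + c - c * rho ^ 2)
        / ((1 - rho ^ 2) * (1 + c - c * rho) * (1 + c + c * rho)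
           * (1 + c + c * rho ^ 2))).
  { unfold G, b, uL. field. nz; lra. }
  assert (Em : G b um = (1 - c) ^ 2 * (1 - c + c * rho ^ 2)
        / ((1 - rho ^ 2) * (1 - c - c * rho) * (1 - c - c * rho ^ 2)
           * (1 - c + c * rho))).
  { unfold G, b, um. field. nz. all: try lra.
    - replace ((1 - c * rho) * (1 - c) - (1 - c * rho + 2 * (c * rho)) * - (rho * (1 - c * rho))) with ((1-c*rho)*(1-c+rho+c*rho^2)) by ring. apply Rmult_lt_0_compat; nra.
    - replace ((1 - c * rho) * (1 - c) + c * rho * - (rho * (1 - c * rho))) with ((1-c*rho)*(1-c-c*rho^2)) by ring. apply Rmult_lt_0_compat; nra.
    - replace (1 - c + - (rho * (1 - c * rho))) with ((1-rho)*(1-c-c*rho)) by ring. apply Rmult_lt_0_compat; nra. }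
  assert (HLm : G b uL <= G b um).
  { rewrite EL, Em. apply frac_le; [repeat apply Rmult_lt_0_compat; lra| repeat apply Rmult_lt_0_compat; lra|].
    assert (Hbr : 0 < 1 - c^2 - c^2*rho^2 - c^4*rho^2 + c^4*rho^4).
    { assert (c^2 <= 1/4) by nra. assert (rho^2 <= 1) by nra.
      assert (0 <= c^2*rho^2) by nra. assert (c^2*rho^2 <= c^2) by nra.
      assert (c^4*rho^2 <= c^2*rho^2/4) by nra. nra. }
    assert (0 <= (1-rho^2)*(4*c*rho^2)*(1 - c^2 - c^2*rho^2 - c^4*rho^2 + c^4*rho^4)).
    { apply Rmult_le_pos; [apply Rmult_le_pos|]; nra. }
    nra. }
  assert (HG : forall u, um <= u <= uL -> G b u <= G b um).
  { intros u Hu. destruct (Rle_or_lt u 0).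
    - apply G_dec; lra.
    - apply Rle_trans with (G b uL); [apply G_inc; lra|exact HLm]. }
  assert (Hs2 : 0 <= sigma_w^2) by nra.
  assert (Hmm : m <= m <= L) by lra.
  assert (HLL : m <= L <= L) by lra.
  destruct (HJ m Hmm) as [HJm _]. destruct (HJ L HLL) as [HJL _].
  rewrite Hum in HJm. rewrite HuL in HJL.
  assert (Hia : m <= 1/alpha <= L).
  { split.
    - apply (Rmult_le_reg_l alpha); [lra|]. field_simplify; lra.
    - apply (Rmult_le_reg_l alpha); [lra|]. field_simplify; [|lra]. lra. }
  destruct (HJ (1/alpha) Hia) as [HJa _].
  replace (alpha*(1/alpha) - 1) with 0 in HJa by (field; lra).
  assert (HG0 : G b 0 = 1) by (unfold G; field).
  rewrite HG0 in HJa.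
  split; [|split; [|split; [|split; [|split; [|split; [|split]]]]]].
  - intros lam Hl. destruct (HJ lam Hl) as [-> Hu]. rewrite HJm.
    apply Rmult_le_compat_l; auto.
  - rewrite HJm, Em. unfold r. rewrite Hk. field. nz; lra.
  - rewrite HJm, HJL. apply Rmult_le_compat_l; auto.
  - rewrite HJL, EL. field. nz; lra.
  - exact Hia.
  - intros lam Hl. destruct (HJ lam Hl) as [-> Hu]. rewrite HJa.
    apply Rmult_le_compat_l; auto.
    apply G_ge1; [auto|lra|].
    destruct (Rle_or_lt (alpha*lam-1) 0).
    + assert (0 <= b*(-(alpha*lam-1))) by (apply Rmult_le_pos; lra). nra.
    + assert (0 <= (1+2*b)*(uL - (alpha*lam-1))) by (apply Rmult_le_pos; lra). lra.
  - rewrite HJa; ring.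
  - unfold r. split.
    + apply (Rmult_le_reg_r ((1 - c) * (1 + c - c * rho))); [nra|].
      field_simplify; [nra|nz; lra].
    + apply (Rmult_le_reg_r ((1 - c) * (1 + c - c * rho))); [nra|].
      field_simplify; [nra|nz; lra].
Qed.
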